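(* For $n\ge 2$, let $Q_n^B$ denote the number of relative derangements of type $B$ on $[n]$ and $D_n^B$ the number of derangements of type $B$ on $[n]$ (with $D_0^B=1$). Then $$Q_n^B = D_n^B + D_{n-1}^B.$$
   Context: Let $[n]=\{1,\dots,n\}$. A signed permutation on $[n]$ is a bijection $\pi$ of $\{\bar 1,\dots,\bar n,1,\dots,n\}$ with $\pi(\bar i)=\overline{\pi(i)}$; equivalently, a word $\pi_1\pi_2\cdots\pi_n$ which is an ordinary permutation of $[n]$ in which some entries carry a bar. A derangement of type $B$ on $[n]$ is a signed permutation $\pi_1\cdots\pi_n$ with $\pi_i\neq i$ (as a signed element, i.e. $\pi_i=\bar i$ is allowed) for all $i\in[n]$. A relative derangement of type $B$ on $[n]$ is a signed permutation $\pi_1\cdots\pi_n$ on $[n]$ such that for every $1\le i\le n-1$, the entry $i$ is not immediately followed by $i+1$, and the entry $\bar i$ is not immediately followed by $\overline{i+1}$. *)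

(* Defs.v *)
From mathcomp Require Import all_boot all_order all_fingroup.
Set Implicit Arguments. Unset Strict Implicit. Unset Printing Implicit Defensive.

(* A signed permutation on [n] (0-indexed as 'I_n) is a pair (s, b):
   the word pi_1 ... pi_n has absolute values given by the permutation s
   (position i carries the value s i) and b i = true means that the entry
   at position i carries a bar. This is in bijection with signed
   permutations (bijections of {bar n..bar 1,1..n} commuting with bar). *)
Definition signed_perm (n : nat) : finType := ({perm 'I_n} * {ffun 'I_n -> bool})%type.

(* pi_i <> i as a signed element: forbidden is value i unbarred at position i. *)
Definition is_derangementB n (p : signed_perm n) : bool :=
  [forall i : 'I_n, ~~ ((p.1 i == i) && ~~ p.2 i)].

(* For consecutive positions j, j+1: not (pi_j = k and pi_{j+1} = k+1) and
   not (pi_j = bar k and pi_{j+1} = bar (k+1)). *)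
Definition is_rel_derangementB n (p : signed_perm n) : bool :=
  [forall j : 'I_n, forall j' : 'I_n,
     (val j' == (val j).+1) ==>
     ~~ [&& (val (p.1 j')) == (val (p.1 j)).+1 & p.2 j == p.2 j']].

Definition DB (n : nat) : nat := #|[pred p : signed_perm n | is_derangementB p]|.
Definition QB (n : nat) : nat := #|[pred p : signed_perm n | is_rel_derangementB p]|.

(* Main.v *)
Require Import Defs.
From mathcomp Require Import all_boot all_order all_fingroup.
Set Implicit Arguments. Unset Strict Implicit. Unset Printing Implicit Defensive.

Notation X := (nat * bool)%type.

Definition valid n (w : seq X) :=
  [&& size w == n, uniq (map fst w) & all (fun x => x < n) (map fst w)].

Definition inc k x := if x <= k then x else x.+1.
Definition dec k x := if k < x then x.-1 else x.

Fixpoint expand k (w : seq X) : seq X :=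
  match w with
  | [::] => [::]
  | x :: t => if x.1 == k then (k, x.2) :: (k.+1, x.2) :: expand k t
              else (inc k x.1, x.2) :: expand k t
  end.

Fixpoint contract k (w : seq X) : seq X :=
  match w with
  | [::] => [::]
  | x :: t => if x.1 == k.+1 then contract k t
              else (dec k.+1 x.1, x.2) :: contract k t
  end.

Definition pairok k (x y : X) := [&& x.1 == k, y.1 == k.+1 & x.2 == y.2].

Fixpoint Adj k (w : seq X) : bool :=
  match w with
  | x :: ((y :: _) as t) => pairok k x y || Adj k t
  | _ => false
  end.

From mathcomp Require Import zify.
Lemma contract_expand k v : contract k (expand k v) = v.
Proof.
elim: v => [|[x b] t IH] //=.
case: eqP => [->|/eqP nx] /=.
  have -> : (k == k.+1) = false by lia.
  by rewrite eqxx IH /dec; case: ifP => //; lia.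
rewrite /inc; case: leqP => hx /=.
  have -> : (x == k.+1) = false by lia.
  by rewrite /dec IH; case: ifP => //; lia.
have -> : (x.+1 == k.+1) = false by lia.
by rewrite /dec IH; case: ifP => //; lia.
Qed.

Lemma expand_contract0 k u : k \notin map fst u -> k.+1 \notin map fst u ->
  expand k (contract k u) = u.
Proof.
elim: u => [|[x b] t IH] //=; rewrite !inE !negb_or => /andP[h1 h2] /andP[h3 h4].
have -> : (x == k.+1) = false by apply/negbTE; rewrite eq_sym.
rewrite /= IH //.
have hx : x != k by rewrite eq_sym.
have -> : (dec k.+1 x == k) = false by rewrite /dec; case: ifP; lia.
by congr (_ :: _); congr (_, _); rewrite /inc /dec; case: ifP; case: ifP => //; lia.
Qed.

Lemma Adj_mem k w : Adj k w -> k.+1 \in map fst w.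
Proof.
elim: w => [|x [|y t] IH] //=.
case/orP => [/and3P[_ /eqP <- _]|/IH]; rewrite !inE ?eqxx ?orbT //.
by move=> ->; rewrite !orbT.
Qed.

Lemma Adj_mem0 k w : Adj k w -> k \in map fst w.
Proof.
elim: w => [|x [|y t] IH] //=.
case/orP => [/and3P[/eqP <- _ _]|/IH]; rewrite !inE ?eqxx ?orbT //=.
by case/orP => ->; rewrite !orbT.
Qed.

Lemma expand_contract k w : uniq (map fst w) -> Adj k w -> expand k (contract k w) = w.
Proof.
elim: w => [|[x b] t IH] //= /andP[hx hu].
case: t IH hx hu => [|[y c] t] IH hx hu //=.
case/orP.
  case/and3P => /= /eqP ? /eqP ? /eqP ?; subst.
  move: hx hu; rewrite /= !inE negb_or => /andP[_ hk] /andP[hk1 hu].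
  have -> : dec k.+1 k = k by rewrite /dec; case: ifP; lia.
  rewrite eqxx /=.
  have -> : (k == k.+1) = false by lia.
  by rewrite /= eqxx expand_contract0.
move=> hA0; have hA : Adj k ((y, c) :: t) := hA0.
have hxk1 : x != k.+1.
  by apply: contra hx => /eqP ->; apply: (Adj_mem hA).
have hxk : x != k.
  by apply: contra hx => /eqP ->; apply: (Adj_mem0 hA).
rewrite (negbTE hxk1) /=.
change (if y == k.+1 then _ else _) with (contract k ((y,c)::t)).
rewrite IH //.
have -> : (dec k.+1 x == k) = false by rewrite /dec; case: ifP; lia.
by congr (_ :: _); congr (_, _); rewrite /inc /dec; case: ifP; case: ifP => //; lia.
Qed.

Lemma Adj_cons k a u :
  Adj k (a :: u) = (if u is y :: _ then pairok k a y else false) || Adj k u.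
Proof. by case: u. Qed.

Lemma key1 k k' x y : k' != k -> x != k ->
  (inc k x == k') && (inc k y == k'.+1) = (x == dec k k') && (y == (dec k k').+1).
Proof.
move=> h1 h2; rewrite /inc /dec.
by case: ifP => h3; case: ifP => h4; case: ifP => h5; apply/idP/idP; lia.
Qed.

Lemma key2 k k' y : k' != k ->
  (k.+1 == k') && (inc k y == k'.+1) = (k == dec k k') && (y == (dec k k').+1).
Proof.
move=> h1; rewrite /inc /dec.
by case: ifP => h4; case: ifP => h5; apply/idP/idP; lia.
Qed.

Lemma head_expand k y c t : exists u, expand k ((y, c) :: t) = (inc k y, c) :: u.
Proof.
rewrite /=; case: eqP => [->|_]; last by eexists.
by exists ((k.+1, c) :: expand k t); rewrite /inc leqnn.
Qed.

Lemma Adj_expand k k' v : k' != k -> Adj k' (expand k v) = Adj (dec k k') v.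
Proof.
move=> hk; elim: v => [|[x b] t IH] //.
rewrite [Adj _ (_ :: t)]Adj_cons -IH /=.
case: eqP => [->|/eqP hx].
  rewrite [Adj _ (_ :: _ :: _)]Adj_cons [Adj _ (_ :: expand _ _)]Adj_cons.
  have -> : pairok k' (k, b) (k.+1, b) = false by rewrite /pairok /= eq_sym (negbTE hk).
  rewrite /=; congr (_ || _).
  case: t {IH} => [|[y c] t] //.
  case: (head_expand k y c t) => u ->.
  by rewrite /pairok /= !andbA key2.
rewrite [Adj _ (_ :: expand _ _)]Adj_cons; congr (_ || _).
case: t {IH} => [|[y c] t] //.
case: (head_expand k y c t) => u ->.
by rewrite /pairok /= !andbA key1.
Qed.

Lemma Adj_expand_self k v : k \in map fst v -> Adj k (expand k v).
Proof.
elim: v => [|[x b] t IH] //=; rewrite inE.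
case: (x =P k) => [->|/eqP hx] /=.
  by rewrite /pairok /= !eqxx.
move=> /orP[/eqP e|/IH]; first by rewrite e eqxx in hx.
by case: (expand k t) => [|y u] // ->; rewrite orbT.
Qed.

Lemma mem_expand k v y : (y \in map fst (expand k v)) =
  (y \in map (inc k) (map fst v)) || ((y == k.+1) && (k \in map fst v)).
Proof.
elim: v => [|[x b] t IH] /=; first by rewrite andbF.
case: eqP => [->|/eqP hx] /=; rewrite !inE IH.
  have -> : inc k k = k by rewrite /inc leqnn.
  by rewrite eqxx; case: (y == k); case: (y == k.+1) => //=; rewrite ?orbT.
have -> : (k == x) = false by apply/negbTE; rewrite eq_sym.
by rewrite /= orbA.
Qed.

Lemma size_expand k v : size (expand k v) = size v + count_mem k (map fst v).
Proof.
elim: v => [|[x b] t IH] //=; case: eqP => [_|_] /=; rewrite IH; set c := count _ _; lia.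
Qed.

Lemma inc_inj k : injective (inc k).
Proof. by move=> x y; rewrite /inc; case: ifP; case: ifP; lia. Qed.

Lemma notin_inc k s y : (forall z, inc k z = y -> z \notin s) -> y \notin map (inc k) s.
Proof. by move=> h; apply/mapP => [[z hz ez]]; move: (h z (esym ez)); rewrite hz. Qed.

Lemma uniq_expand k v : uniq (map fst v) -> uniq (map fst (expand k v)).
Proof.
elim: v => [|[x b] t IH] //= /andP[hx hu].
case: eqP => [e|/eqP ne] /=; subst.
  have e1 : k \notin map (inc k) (map fst t).
    by apply: notin_inc => z; rewrite /inc; case: ifP => h e; [subst|lia].
  have e2 : k.+1 \notin map (inc k) (map fst t).
    by apply: notin_inc => z; rewrite /inc; case: ifP => h e; [lia| have -> : z = k by lia].
  rewrite !inE !mem_expand (negbTE e1) (negbTE e2) (negbTE hx) IH // !andbF !andbT /=.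
  lia.
rewrite mem_expand negb_or IH // andbT (mem_map (@inc_inj k)) hx /= negb_and.
apply/orP; left; rewrite /inc; case: ifP; lia.
Qed.

Lemma valid_mem n v k : valid n v -> k < n -> k \in map fst v.
Proof.
case/and3P => /eqP hs hu /allP ha hk; apply/negPn/negP => hn.
have H : {subset k :: map fst v <= iota 0 n}.
  move=> y; rewrite inE mem_iota add0n => /orP[/eqP ->|/ha]; lia.
have hu' : uniq (k :: map fst v) by rewrite /= hn hu.
have := uniq_leq_size hu' H; rewrite /= size_iota size_map hs; lia.
Qed.

Lemma valid_expand n v k : valid n v -> k < n -> valid n.+1 (expand k v).
Proof.
move=> hv hk; have hm := valid_mem hv hk.
case/and3P: hv => /eqP hs hu /allP ha.
apply/and3P; split.
- by rewrite size_expand hs count_uniq_mem // hm addn1.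
- exact: uniq_expand.
- apply/allP => y; rewrite mem_expand => /orP[/mapP[z /ha hz ->]|/andP[/eqP -> _]] //.
  by rewrite /inc; case: ifP; lia.
Qed.

Lemma map_contract k w :
  map fst (contract k w) = map (dec k.+1) (filter (predC1 k.+1) (map fst w)).
Proof.
by elim: w => [|[x b] t IH] //=; case: eqP => _ /=; rewrite IH.
Qed.

Lemma valid_contract n w k : valid n.+1 w -> Adj k w -> valid n (contract k w).
Proof.
move=> hv hA; have hm := Adj_mem hA.
case/and3P: hv => /eqP hs hu /allP ha.
have hk := ha _ hm.
apply/and3P; split; rewrite ?map_contract.
- rewrite -(size_map fst) map_contract size_map size_filter.
  have := count_predC (pred1 k.+1) (map fst w).
  rewrite count_uniq_mem // hm size_map hs => h.
  by apply/eqP/(@addnI 1); rewrite [RHS]add1n -h.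
- rewrite map_inj_in_uniq ?filter_uniq // => x y.
  rewrite !mem_filter /= /dec => /andP[hx _] /andP[hy _].
  case: ifP; case: ifP; lia.
- apply/allP => y /mapP[z]; rewrite mem_filter /= => /andP[hz /ha hz2] ->.
  rewrite /dec; case: ifP; lia.
Qed.

Definition word n (p : signed_perm n) : seq X :=
  [seq (val (p.1 i), p.2 i) | i <- enum 'I_n].

Definition allw n := map (@word n) (enum (signed_perm n)).

Lemma nth_word n (p : signed_perm n) (i : 'I_n) x0 :
  nth x0 (word p) i = (val (p.1 i), p.2 i).
Proof. by rewrite (nth_map i) ?size_enum_ord // nth_ord_enum. Qed.

Lemma size_word n (p : signed_perm n) : size (word p) = n.
Proof. by rewrite size_map size_enum_ord. Qed.

Lemma word_inj n : injective (@word n).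
Proof.
move=> [s b] [s' b'] e.
have h i : (val (s i), b i) = (val (s' i), b' i).
  by rewrite -(nth_word (s, b) i (0, true)) e nth_word.
congr (_, _).
  by apply/permP => i; case: (h i) => /val_inj.
by apply/ffunP => i; case: (h i).
Qed.

Lemma allw_uniq n : uniq (allw n).
Proof. by rewrite map_inj_uniq ?enum_uniq //; apply: word_inj. Qed.

Lemma valid_word n (p : signed_perm n) : valid n (word p).
Proof.
apply/and3P; split.
- by rewrite size_word.
- rewrite -map_comp map_inj_uniq ?enum_uniq // => i j /= /val_inj.
  exact: perm_inj.
- by rewrite -map_comp; apply/allP => x /mapP[y _ ->]; rewrite /= ltn_ord.
Qed.

Lemma mem_allw n w : (w \in allw n) = valid n w.
Proof.
apply/idP/idP; first by case/mapP => p _ ->; apply: valid_word.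
case/and3P => /eqP hs hu /allP ha.
pose f := fun i : 'I_n => (insubd i (nth 0 (map fst w) i) : 'I_n).
have hlt (i : 'I_n) : nth 0 (map fst w) i < n.
  by apply: ha; rewrite mem_nth // size_map hs.
have f_inj : injective f.
  move=> i j; rewrite /f => /(congr1 val); rewrite !val_insubd !hlt => e.
  by apply/val_inj; move/eqP: e; rewrite nth_uniq ?size_map ?hs // => /eqP.
apply/mapP; exists (perm f_inj, [ffun i : 'I_n => nth false (map snd w) i]); first by rewrite mem_enum.
apply: (@eq_from_nth _ (0, true)); first by rewrite size_word hs.
move=> i; rewrite hs => hi.
have -> : i = val (Ordinal hi) by [].
rewrite nth_word /= permE ffunE /f val_insubd hlt.
rewrite (nth_map (0, true)) ?hs // (nth_map (0, true)) ?hs //.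
by case: (nth _ w _).
Qed.

Lemma count_allw n (P : pred (seq X)) :
  count P (allw n) = #|[pred p : signed_perm n | P (word p)]|.
Proof.
rewrite count_map cardE /enum_mem size_filter count_filter.
by apply: eq_count => x /=; rewrite andbT.
Qed.

Lemma count_bij (T1 T2 : eqType) (U1 : seq T1) (U2 : seq T2) (P1 : pred T1)
  (P2 : pred T2) (f : T2 -> T1) (g : T1 -> T2) :
  uniq U1 -> uniq U2 -> cancel f g ->
  (forall v, v \in U2 -> P2 v -> f v \in U1 /\ P1 (f v)) ->
  (forall w, w \in U1 -> P1 w -> [/\ g w \in U2, P2 (g w) & f (g w) = w]) ->
  count P1 U1 = count P2 U2.
Proof.
move=> u1 u2 fK h1 h2.
rewrite -!size_filter -(size_map f (filter P2 U2)); apply: perm_size.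
apply: uniq_perm; first exact: filter_uniq.
  by rewrite (map_inj_uniq (can_inj fK)) filter_uniq.
move=> w; rewrite mem_filter; apply/andP/mapP.
  by case=> hp hw; case: (h2 w hw hp) => ha hb hc; exists (g w); rewrite ?mem_filter ?ha ?hb.
case=> v; rewrite mem_filter => /andP[hp hv] ->; case: (h1 v hv hp) => ??; split => //.
Qed.

Lemma card_sp n : #|signed_perm n| = 2 ^ n * n`!.
Proof. by rewrite card_prod card_Sn card_ffun card_bool card_ord mulnC. Qed.

Lemma Gcount T n : uniq T -> all (fun k => k.+1 < n) T ->
  count (fun w => all (fun k => Adj k w) T) (allw n) = 2 ^ (n - size T) * (n - size T)`!.
Proof.
move: {2}(size T) (erefl (size T)) => s; elim: s T n => [|s IH] [|k T] n //=.
  move=> _ _ _; rewrite subn0 (eq_count (a2 := predT)) // count_predT size_map.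
  by rewrite -cardE card_sp.
move=> [hs]; case: n => [|m] /andP[hkT hu] /andP[hk ha] //.
pose T' := map (dec k) T.
have hT' : uniq T'.
  rewrite map_inj_in_uniq // => x y hx hy; rewrite /dec.
  have : x != k by apply: contraNneq hkT => <-.
  have : y != k by apply: contraNneq hkT => <-.
  by case: ifP; case: ifP; lia.
have ha' : all (fun k0 => k0.+1 < m) T'.
  apply/allP => y /mapP[x hx ->]; have := allP ha x hx.
  have : x != k by apply: contraNneq hkT => <-.
  by rewrite /dec; case: ifP; lia.
have := IH T' m; rewrite size_map hs subSS => <- //.
apply: (@count_bij _ _ _ _ _ _ (expand k) (contract k)).
- exact: allw_uniq.
- exact: allw_uniq.
- exact: contract_expand.
- move=> v; rewrite !mem_allw => hv hA; split; first exact: valid_expand.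
  rewrite Adj_expand_self ?(valid_mem hv) //=.
  apply/allP => x hx; have hxk : x != k by apply: contraNneq hkT => <-.
  by rewrite Adj_expand // (allP hA) // map_f.
- move=> w; rewrite !mem_allw => hw /andP[hA hAT].
  have hwu : uniq (map fst w) by case/and3P: hw.
  have hc := expand_contract hwu hA.
  split => //; first exact: valid_contract hw hA.
  apply/allP => y /mapP[x hx ->]; have hxk : x != k by apply: contraNneq hkT => <-.
  by rewrite -Adj_expand // hc (allP hAT).
Qed.

Definition Fix i (w : seq X) := nth (0, true) w i == (i, false).

Lemma allFix_word n (p : signed_perm n) T : all (fun i => i < n) T ->
  all (fun i => Fix i (word p)) T =
  [forall i : 'I_n, (val i \in T) ==> ((p.1 i == i) && ~~ p.2 i)].
Proof.
move=> /allP ha; apply/allP/forallP => H.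
  move=> i; apply/implyP => hi; have := H _ hi.
  by rewrite /Fix nth_word xpair_eqE; case: (p.2 i).
move=> x hx; have hxn := ha x hx.
have := H (Ordinal hxn); rewrite hx /= /Fix.
by rewrite (nth_word p (Ordinal hxn)) xpair_eqE; case: (p.2 _).
Qed.

Lemma card_setT_seq n T : uniq T -> all (fun i => i < n) T ->
  #|[set i : 'I_n | val i \in T]| = size T.
Proof.
move=> hu /allP ha; rewrite cardE -(size_map val); apply: perm_size.
apply: uniq_perm => //; first by rewrite map_inj_uniq ?enum_uniq //; apply: val_inj.
move=> x; apply/mapP/idP => [[i]|hx]; first by rewrite mem_enum inE => h ->.
by exists (Ordinal (ha x hx)); rewrite // mem_enum inE.
Qed.

Lemma Fcount T n : uniq T -> all (fun i => i < n) T ->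
  count (fun w => all (fun i => Fix i w) T) (allw n) = 2 ^ (n - size T) * (n - size T)`!.
Proof.
move=> hu ha; rewrite count_allw.
pose S := [set i : 'I_n | val i \in T].
rewrite (eq_card (B := [predX perm_on (~: S) & pffun_on false (~: S) [set: bool]])).
  rewrite cardX card_perm card_pffun_on cardsT card_bool.
  have := cardsC S; rewrite card_ord card_setT_seq // => h.
  have -> : n - size T = #|~: S| by lia.
  by rewrite mulnC.
case=> s b; rewrite inE /= allFix_word // inE /=.
apply/forallP/andP => [H|[hs /pffun_onP[hb _]] i].
  split.
    apply/subsetP => x; rewrite inE /= inE inE; apply: contra => hx.
    by have := H x; rewrite hx /= => /andP[/eqP -> _]; rewrite eqxx.
  apply/pffun_onP; split; last by move=> y _; rewrite inE.
  apply/subsetP => x; rewrite inE /= !inE.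
  by apply: contra => hx; have := H x; rewrite hx /= => /andP[_ /negbTE ->].
apply/implyP => hi; apply/andP; split.
  apply/negPn/negP => hsi; have := subsetP hs i.
  by rewrite !inE /= hsi hi => /(_ isT).
apply/negP => hbi; have := subsetP hb i.
by rewrite !inE /= hbi hi => /(_ isT).
Qed.

Lemma AdjE k w : Adj k w =
  has (fun j => pairok k (nth (0, true) w j) (nth (0, true) w j.+1)) (iota 0 (size w).-1).
Proof.
elim: w => [|x t IH] //; rewrite Adj_cons IH.
case: t IH => [|y t] IH //=.
by rewrite -add1n iotaDl has_map.
Qed.

Lemma Fix_word n (p : signed_perm n) (i : 'I_n) :
  Fix i (word p) = (p.1 i == i) && ~~ p.2 i.
Proof. by rewrite /Fix nth_word xpair_eqE; case: (p.2 i). Qed.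

Lemma rel_word n (p : signed_perm n) :
  is_rel_derangementB p = [forall i : 'I_n.-1, ~~ Adj i (word p)].
Proof.
rewrite /is_rel_derangementB; apply/forallP/forallP => H.
  move=> i; apply/negP; rewrite AdjE size_word => /hasP[j].
  rewrite mem_iota add0n => hj.
  have hj0 : j < n by lia.
  have hj1 : j.+1 < n by lia.
  rewrite (nth_word p (Ordinal hj0)) (nth_word p (Ordinal hj1)) /pairok /=.
  case/and3P => /eqP e1 /eqP e2 e3.
  have := H (Ordinal hj0); move/forallP => /(_ (Ordinal hj1)); rewrite /= eqxx /=.
  by rewrite e1 e2 eqxx e3.
move=> j; apply/forallP => j'; apply/implyP => /eqP hj'.
apply/negP => /andP[/eqP e1 e3].
have e1' : (p.1 j' : nat) = (p.1 j : nat).+1 := e1.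
have hk : (p.1 j : nat) < n.-1 by have := ltn_ord (p.1 j'); lia.
have := H (Ordinal hk); rewrite AdjE size_word => /negP; apply.
apply/hasP; exists (val j); first by rewrite mem_iota add0n; change ((j:nat) < n.-1); have hj'' : (j' : nat) = (j : nat).+1 := hj'; have := ltn_ord j'; lia.
rewrite (nth_word p j); have -> : (val j).+1 = val j' by [].
by rewrite nth_word /pairok /= e1 !eqxx e3.
Qed.

Lemma valid_rcons n v b : valid n.+1 (rcons v (n, b)) = valid n v.
Proof.
rewrite /valid map_rcons size_rcons rcons_uniq all_rcons /= eqSS ltnSn /=.
case: (size v == n) => //=.
case: (boolP (all (fun x => x < n) (map fst v))) => ha.
  have -> : n \notin map fst v by apply/negP => /(allP ha); rewrite ltnn.
  rewrite /=; case: (uniq _) => //=; apply/allP => x /(allP ha); lia.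
case: (boolP (n \in map fst v)) => //= hn; case: (uniq _) => //=.
apply/negbTE; apply: contra ha => /allP h; apply/allP => x hx.
have := h x hx; have : x != n by apply: contraNneq hn => <-.
lia.
Qed.

Lemma Fix_rcons v x i : i < size v -> Fix i (rcons v x) = Fix i v.
Proof. by move=> h; rewrite /Fix nth_rcons h. Qed.

Lemma forall_in_all m (T : {set 'I_m}) (a : nat -> bool) :
  [forall i in T, a i] = all a (map val (enum T)).
Proof.
apply/forallP/allP => [H x /mapP[i hi ->]|H i].
  by have := H i; rewrite -mem_enum hi.
by apply/implyP => hi; apply: H; apply: map_f; rewrite mem_enum.
Qed.

Lemma uniq_valenum m (T : {set 'I_m}) : uniq (map val (enum T)).
Proof. by rewrite map_inj_uniq ?enum_uniq //; apply: val_inj. Qed.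

Lemma E_split m :
  count (fun w => [forall i : 'I_m.+1, ~~ Fix i w]) (allw m.+2) =
  count (fun w => [forall i : 'I_m.+2, ~~ Fix i w]) (allw m.+2) +
  count (fun w => [forall i : 'I_m.+1, ~~ Fix i w]) (allw m.+1).
Proof.
set P := fun w => [forall i : 'I_m.+1, ~~ Fix i w].
rewrite -size_filter -(count_predC (Fix m.+1)) !count_filter addnC.
congr (_ + _).
  apply: eq_count => w /=; rewrite andbC; apply/andP/forallP => [[/forallP H h] i|H].
    case: (ltngtP i m.+1) => hi.
    - by have := H (Ordinal hi).
    - by have := ltn_ord i; lia.
    - by rewrite hi.
  split; last by have := H ord_max.
  by apply/forallP => i; have := H (widen_ord (leqnSn _) i).
apply: (@count_bij _ _ _ _ _ _ (rcons^~ (m.+1, false)) (fun w => take (size w).-1 w)).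
- exact: allw_uniq.
- exact: allw_uniq.
- by move=> v /=; rewrite size_rcons -cats1 take_size_cat.
- move=> v; rewrite !mem_allw valid_rcons => hv hP; split => //.
  have hs : size v = m.+1 by case/and3P: hv => /eqP.
  rewrite /= {1}/Fix nth_rcons hs ltnn !eqxx /= /P.
  apply/forallP => i; rewrite Fix_rcons ?hs //; exact: (forallP hP).
- move=> w; rewrite !mem_allw => hw /andP[hF hP]; rewrite /P.
  have hs : size w = m.+2 by move/and3P: (hw) => [/eqP].
  rewrite hs /=.
  have ew : w = rcons (take m.+1 w) (m.+1, false).
    by rewrite -(eqP hF) -take_nth ?hs // -hs take_size.
  have hst : size (take m.+1 w) = m.+1 by rewrite size_takel // hs.
  split.
  + by rewrite -(valid_rcons _ _ false) -ew.
  + apply/forallP => i; rewrite -(@Fix_rcons _ (m.+1, false)) ?hst // -ew; exact: (forallP hP).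
  + exact: (esym ew).
Qed.

From mathcomp Require Import all_algebra.

Section IEsec.
Import GRing.Theory.
Local Open Scope ring_scope.
Lemma count_int (Y : Type) (P : pred Y) (U : seq Y) :
  (count P U)%:Z = \sum_(x <- U) (P x : nat)%:Z.
Proof. by elim: U => [|x U IH]; rewrite ?big_nil ?big_cons //= PoszD IH. Qed.

Lemma prod_bool (I : finType) (P : pred I) (a : I -> bool) :
  ([forall i, P i ==> a i] : nat)%:Z = \prod_(i | P i) (a i : nat)%:Z.
Proof.
case: (boolP [forall i, P i ==> a i]) => [/forallP H|/forallPn [i hi]].
  by rewrite big1 // => i hi; have := H i; rewrite hi /= => ->.
rewrite negb_imply in hi; case/andP: hi => hp ha.
by rewrite (bigD1 i) //= (negbTE ha) mul0r.
Qed.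

Lemma IE (Y : Type) (U : seq Y) m (A : 'I_m -> pred Y) :
  (count (fun x => [forall i, ~~ A i x]) U)%:Z =
  \sum_(S : {set 'I_m}) (-1) ^+ #|S| * Posz (count (fun x => [forall i in S, A i x]) U).
Proof.
rewrite count_int.

rewrite (eq_bigr (fun S : {set 'I_m} => \sum_(x <- U) (-1) ^+ #|S| * Posz ([forall i in S, A i x] : nat))); last first.
  by move=> S _; rewrite count_int mulr_sumr.
rewrite exchange_big /=; apply: eq_bigr => x _.
have -> : ([forall i, ~~ A i x] : nat)%:Z = \prod_i (- (A i x : nat)%:Z + 1).
  case: (boolP [forall i, ~~ A i x]) => [/forallP H|/forallPn [i hi]].
    by rewrite big1 // => i _; rewrite (negbTE (H i)).
  by rewrite (bigD1 i) //= (negPn hi) addNr mul0r.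
rewrite bigA_distr; apply: eq_bigr => S _.
rewrite -big_mkcond /= prodrN; congr (_ * _).
by rewrite prod_bool.
Qed.
End IEsec.

Lemma QE m :
  count (fun w => [forall i : 'I_m.+1, ~~ Adj i w]) (allw m.+2) =
  count (fun w => [forall i : 'I_m.+1, ~~ Fix i w]) (allw m.+2).
Proof.
apply/eqP; rewrite -eqz_nat; apply/eqP.
rewrite (IE _ (fun i w => Adj i w)) (IE _ (fun i w => Fix i w)).
apply: eq_bigr => T _; congr (_ * Posz _)%R.
rewrite (eq_count (a2 := fun w => all (fun k => Adj k w) (map val (enum T)))); last first.
  by move=> w; exact: (forall_in_all T (fun k => Adj k w)).
rewrite (eq_count (a2 := fun w => all (fun k => Fix k w) (map val (enum T))) (a1 := fun w => [forall i in T, Fix i w])); last first.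
  by move=> w; exact: (forall_in_all T (fun k => Fix k w)).
rewrite Gcount ?Fcount ?uniq_valenum //.
  by apply/allP => x /mapP[i _ ->]; change (val i) with (nat_of_ord i); have := ltn_ord i; lia.
by apply/allP => x /mapP[i _ ->]; change (val i) with (nat_of_ord i); have := ltn_ord i; lia.
Qed.

Theorem theorem1 (n : nat) : 2 <= n -> QB n = DB n + DB n.-1.
Proof.
case: n => [|[|m]] // _.
have hD k : DB k = count (fun w => [forall i : 'I_k, ~~ Fix i w]) (allw k).
  rewrite /DB count_allw; apply: eq_card => p; rewrite !inE /is_derangementB.
  by apply: eq_forallb => i; rewrite Fix_word.
have hQ : QB m.+2 = count (fun w => [forall i : 'I_m.+1, ~~ Adj i w]) (allw m.+2).
  by rewrite /QB count_allw; apply: eq_card => p; rewrite !inE rel_word.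
by rewrite hQ QE E_split !hD.
Qed.
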